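(* Let $A,\Delta A\in\mathbb{R}^{n\times m}$, $\widetilde A=A+\Delta A$, $1\le r<\min\{n,m\}$, and assume $\sigma_r-\widetilde\sigma_{r+1}>0$ and $\widetilde\sigma_r-\sigma_{r+1}>0$. Let $H_1\in\mathbb{R}^{(n-r)\times r}$, $H_2\in\mathbb{R}^{(m-r)\times r}$, $H_3\in\mathbb{R}^{r\times (m-r)}$, $H_4\in\mathbb{R}^{r\times(n-r)}$ be arbitrary, and set $B_1=F_U^{21}\circ(H_1\widetilde\Sigma_1)$, $B_2=F_U^{21}\circ(\Sigma_2H_2)$, $B_3=F_U^{12}\circ(H_3\widetilde\Sigma_2^T)$, $B_4=F_U^{12}\circ(\Sigma_1H_4)$. Then for $p\in\{2,\infty\}$, \[\|B_1\|_p\le\frac{\widetilde\sigma_r}{\widetilde\sigma_r^2-\sigma_{r+1}^2}\|H_1\|_p,\quad \|B_2\|_p\le\frac{\sigma_{r+1}}{\widetilde\sigma_r^2-\sigma_{r+1}^2}\|H_2\|_p,\] \[\|B_3\|_p\le\frac{\widetilde\sigma_{r+1}}{\sigma_r^2-\widetilde\sigma_{r+1}^2}\|H_3\|_p,\quad \|B_4\|_p\le\frac{\sigma_{r}}{\sigma_r^2-\widetilde\sigma_{r+1}^2}\|H_4\|_p.\]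
   Context: $\sigma_1\ge\sigma_2\ge\dots$ and $\widetilde\sigma_1\ge\widetilde\sigma_2\ge\dots$ are the singular values of $A$ and $\widetilde A$, with $\sigma_i=\widetilde\sigma_i=0$ for $i>\min\{n,m\}$. $\Sigma_1=\mathrm{diag}(\sigma_1,\dots,\sigma_r)$, $\widetilde\Sigma_1=\mathrm{diag}(\widetilde\sigma_1,\dots,\widetilde\sigma_r)$; $\Sigma_2,\widetilde\Sigma_2\in\mathbb{R}^{(n-r)\times(m-r)}$ are rectangular diagonal matrices with diagonals $\sigma_{r+1},\sigma_{r+2},\dots$ and $\widetilde\sigma_{r+1},\widetilde\sigma_{r+2},\dots$. $F_U^{12}\in\mathbb{R}^{r\times(n-r)}$ has entries $(F_U^{12})_{i,j-r}=1/(\widetilde\sigma_j^2-\sigma_i^2)$ for $1\le i\le r<j\le n$; $F_U^{21}\in\mathbb{R}^{(n-r)\times r}$ has entries $(F_U^{21})_{i-r,j}=1/(\widetilde\sigma_j^2-\sigma_i^2)$ for $r<i\le n$, $1\le j\le r$. $\circ$ is the Hadamard product. $\|\cdot\|_p$ is the Schatten $p$-norm, so $\|\cdot\|_2$ is the Frobenius norm and $\|\cdot\|_\infty$ the spectral norm. *)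

(* Defs.v *)
From HB Require Import structures.
From mathcomp Require Import all_boot all_order all_algebra.
From mathcomp Require Import boolp classical_sets reals.
Set Implicit Arguments. Unset Strict Implicit. Unset Printing Implicit Defensive.
Import Order.TTheory GRing.Theory Num.Theory.
Local Open Scope ring_scope.
Local Open Scope classical_set_scope.

(* Frobenius norm (Schatten 2-norm). *)
Definition frobnorm {R : realType} {p q : nat} (B : 'M[R]_(p, q)) : R :=
  Num.sqrt (\sum_(i < p) \sum_(j < q) B i j ^+ 2).

Definition specnorm {R : realType} {p q : nat} (B : 'M[R]_(p, q)) : R :=
  sup [set frobnorm (B *m x) | x in [set x : 'cV[R]_q | frobnorm x <= 1]].

Inductive schatten_index := p_two | p_inf.

Definition schatten {R : realType} (s : schatten_index) {p q : nat}
  (B : 'M[R]_(p, q)) : R :=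
  match s with p_two => frobnorm B | p_inf => specnorm B end.

Definition hadamard {R : realType} {p q : nat} (F G : 'M[R]_(p, q)) :
  'M[R]_(p, q) := \matrix_(i, j) (F i j * G i j).

Definition diagent {R : realType} {n m : nat} (S : 'M[R]_(n, m)) (k : nat) : R :=
  match @insub _ (fun x => x < n)%N 'I_n k, @insub _ (fun x => x < m)%N 'I_m k with
  | Some i, Some j => S i j
  | _, _ => 0
  end.

Definition is_svd {R : realType} {n m : nat} (A : 'M[R]_(n, m))
  (U : 'M[R]_n) (S : 'M[R]_(n, m)) (V : 'M[R]_m) : Prop :=
  [/\ U *m U^T = 1%:M, V *m V^T = 1%:M,
      (forall (i : 'I_n) (j : 'I_m), (i : nat) != j -> S i j = 0),
      (forall k : nat, 0 <= diagent S k /\ diagent S k.+1 <= diagent S k)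
    & A = U *m S *m V^T].

(* With S the Sigma of an SVD of A, sv S k is sigma_{k+1} (0-based index),
   equal to 0 for k >= min(n,m). *)
Definition sv {R : realType} {n m : nat} (S : 'M[R]_(n, m)) (k : nat) : R :=
  diagent S k.

Definition FU21 {R : realType} (n r : nat) (sig sigt : nat -> R) :
  'M[R]_(n - r, r) :=
  \matrix_(i, j) (1 / (sigt j ^+ 2 - sig (r + i)%N ^+ 2)).

Definition FU12 {R : realType} (n r : nat) (sig sigt : nat -> R) :
  'M[R]_(r, n - r) :=
  \matrix_(i, j) (1 / (sigt (r + j)%N ^+ 2 - sig i ^+ 2)).

Definition Sig1 {R : realType} (r : nat) (sig : nat -> R) : 'M[R]_r :=
  \matrix_(i, j) (if (i : nat) == j then sig i else 0).

Definition Sig2 {R : realType} (n m r : nat) (sig : nat -> R) :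
  'M[R]_(n - r, m - r) :=
  \matrix_(i, j) (if (i : nat) == j then sig (r + i)%N else 0).

(* Main.v *)
Require Import Defs.
From HB Require Import structures.
From mathcomp Require Import all_boot all_order all_algebra.
From mathcomp Require Import boolp classical_sets reals.
From mathcomp Require Import ring lra.
Import Order.TTheory GRing.Theory Num.Theory.
Local Open Scope ring_scope.
Set Implicit Arguments. Unset Strict Implicit.

Section Aux.
Variable R : realType.

Lemma cs_sq (T : finType) (a b : T -> R) :
  (\sum_k a k * b k) ^+ 2 <= (\sum_k a k ^+ 2) * (\sum_k b k ^+ 2).
Proof.
have H0 : 0 <= \sum_i \sum_j (a i * b j - a j * b i) ^+ 2.
  by apply: sumr_ge0 => i _; apply: sumr_ge0 => j _; apply: sqr_ge0.
have E : \sum_i \sum_j (a i * b j - a j * b i) ^+ 2 =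
   \sum_i \sum_j (a i ^+ 2 * b j ^+ 2) + \sum_i \sum_j (a j ^+ 2 * b i ^+ 2)
   - (\sum_i \sum_j (a i * b i) * (a j * b j)) *+ 2.
  rewrite -sumrMnl -big_split -sumrB /=; apply: eq_bigr => i _.
  rewrite -sumrMnl -big_split -sumrB /=; apply: eq_bigr => j _; ring.
have E1 : \sum_i \sum_j (a i ^+ 2 * b j ^+ 2) = (\sum_k a k ^+ 2) * (\sum_k b k ^+ 2).
  by rewrite mulr_suml; apply: eq_bigr => i _; rewrite mulr_sumr.
have E2 : \sum_i \sum_j (a j ^+ 2 * b i ^+ 2) = (\sum_k a k ^+ 2) * (\sum_k b k ^+ 2).
  by rewrite exchange_big /=; exact: E1.
have E3 : \sum_i \sum_j (a i * b i) * (a j * b j) = (\sum_k a k * b k) ^+ 2.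
  by rewrite expr2 mulr_suml; apply: eq_bigr => i _; rewrite mulr_sumr.
move: H0; rewrite E E1 E2 E3 => H0; lra.
Qed.

Lemma cs_sqrt (T : finType) (a b : T -> R) :
  \sum_k a k * b k <= Num.sqrt (\sum_k a k ^+ 2) * Num.sqrt (\sum_k b k ^+ 2).
Proof.
rewrite -sqrtrM; last by apply: sumr_ge0 => k _; apply: sqr_ge0.
apply: (le_trans (ler_norm _)).
rewrite -sqrtr_sqr; apply: ler_wsqrtr; exact: cs_sq.
Qed.

Lemma minkowski (T : finType) (a b : T -> R) :
  Num.sqrt (\sum_k (a k + b k) ^+ 2) <=
  Num.sqrt (\sum_k a k ^+ 2) + Num.sqrt (\sum_k b k ^+ 2).
Proof.
have hA : 0 <= \sum_k a k ^+ 2 by apply: sumr_ge0 => k _; apply: sqr_ge0.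
have hB : 0 <= \sum_k b k ^+ 2 by apply: sumr_ge0 => k _; apply: sqr_ge0.
have hs : 0 <= Num.sqrt (\sum_k a k ^+ 2) + Num.sqrt (\sum_k b k ^+ 2).
  by rewrite addr_ge0 // sqrtr_ge0.
rewrite -[X in _ <= X]ger0_norm // -sqrtr_sqr; apply: ler_wsqrtr.
have -> : \sum_k (a k + b k) ^+ 2 =
   \sum_k a k ^+ 2 + (\sum_k a k * b k) *+ 2 + \sum_k b k ^+ 2.
  rewrite -sumrMnl -!big_split /=; apply: eq_bigr => k _; ring.
have := cs_sqrt a b.
rewrite sqrrD !sqr_sqrtr //.
move: (Num.sqrt (\sum_k a k ^+ 2)) (Num.sqrt (\sum_k b k ^+ 2)) => u v; lra.
Qed.

Lemma single_sum (T : finType) (f : T -> R) :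
  (forall k k', f k != 0 -> f k' != 0 -> k = k') ->
  (\sum_k f k = 0 /\ forall k, f k = 0) \/
  exists k0, \sum_k f k = f k0 /\ forall k, k != k0 -> f k = 0.
Proof.
move=> Hu; case: (pickP (fun k => f k != 0)) => [k0 Hk0|none].
  right; exists k0.
  have Hz : forall k, k != k0 -> f k = 0.
    move=> k Hk; apply/eqP; apply: contraNT Hk => Hk'.
    by apply/eqP; apply: Hu.
  split => //; rewrite (bigD1 k0) //= big1 ?addr0 // => k Hk; exact: Hz.
left; have Hz : forall k, f k = 0 by move=> k; move: (none k) => /= /negbFE /eqP.
by split => //; rewrite big1.
Qed.

Lemma sq_single (T : finType) (f : T -> R) :
  (forall k k', f k != 0 -> f k' != 0 -> k = k') ->
  (\sum_k f k) ^+ 2 = \sum_k f k ^+ 2.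
Proof.
move=> Hu; case: (single_sum Hu) => [[-> Hz]|[k0 [-> Hz]]].
  by rewrite big1 ?expr0n // => k _; rewrite Hz expr0n.
rewrite (bigD1 k0) //= big1 ?addr0 // => k Hk; by rewrite Hz // expr0n.
Qed.

Lemma le_single (T : finType) (f : T -> R) C :
  (forall k k', f k != 0 -> f k' != 0 -> k = k') -> 0 <= C ->
  (forall k, f k <= C) -> \sum_k f k <= C.
Proof.
move=> Hu HC Hf; case: (single_sum Hu) => [[-> _]|[k0 [-> _]]] //.
Qed.

Definition rdiag {p q} (M : 'M[R]_(p, q)) (c : R) :=
  (forall (i : 'I_p) (k : 'I_q), (i : nat) != k -> M i k = 0) /\ (forall i k, `|M i k| <= c).

Lemma rdiag_tr p q (M : 'M[R]_(p, q)) c : rdiag M c -> rdiag M^T c.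
Proof.
move=> [H1 H2]; split => i k; rewrite mxE //.
by move=> h; apply: H1; rewrite eq_sym.
Qed.

Lemma sq_le_of_norm (x c : R) : `|x| <= c -> x ^+ 2 <= c ^+ 2.
Proof.
move=> h; rewrite -real_normK ?num_real; have := normr_ge0 x; move: `|x| h => u; nra.
Qed.

Lemma rdiag_frob p q s (M : 'M[R]_(p, q)) (Y : 'M[R]_(q, s)) c :
  rdiag M c -> 0 <= c -> frobnorm (M *m Y) <= c * frobnorm Y.
Proof.
move=> [Hz Hc] c0; rewrite /frobnorm -[c in c * _]ger0_norm // -sqrtr_sqr -sqrtrM ?sqr_ge0 //.
apply: ler_wsqrtr.
have E : forall i j, (M *m Y) i j ^+ 2 = \sum_k (M i k ^+ 2 * Y k j ^+ 2).
  move=> i j; rewrite mxE sq_single.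
    by apply: eq_bigr => k _; rewrite exprMn.
  move=> k k' h1 h2; apply: val_inj => /=.
  have a1 : M i k != 0 by apply: contraNneq h1 => ->; rewrite mul0r.
  have a2 : M i k' != 0 by apply: contraNneq h2 => ->; rewrite mul0r.
  have e1 : (i : nat) = k by apply/eqP; apply: contraNT a1 => /Hz ->.
  have e2 : (i : nat) = k' by apply/eqP; apply: contraNT a2 => /Hz ->.
  by rewrite -e1 -e2.
under eq_bigr do under eq_bigr do rewrite E.
rewrite exchange_big /=.
under eq_bigr do rewrite exchange_big /=.
rewrite exchange_big mulr_sumr /=; apply: ler_sum => k _.
rewrite mulr_sumr; apply: ler_sum => j _.
rewrite -mulr_suml; apply: ler_wpM2r; first exact: sqr_ge0.
apply: le_single; last first.
- by move=> i; apply: sq_le_of_norm.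
- by apply: sqr_ge0.
move=> i i' h1 h2; apply: val_inj => /=.
have e1 : (i : nat) = k by apply/eqP; apply: contraNT h1 => /Hz ->; rewrite expr0n.
have e2 : (i' : nat) = k by apply/eqP; apply: contraNT h2 => /Hz ->; rewrite expr0n.
by rewrite e1 e2.
Qed.

Lemma frob_ge0 p q (B : 'M[R]_(p, q)) : 0 <= frobnorm B.
Proof. exact: sqrtr_ge0. Qed.

Lemma ss_ge0 p q (B : 'M[R]_(p, q)) : 0 <= \sum_i \sum_j B i j ^+ 2.
Proof. by apply: sumr_ge0 => i _; apply: sumr_ge0 => j _; apply: sqr_ge0. Qed.

Lemma frob_add p q (A B : 'M[R]_(p, q)) :
  frobnorm (A + B) <= frobnorm A + frobnorm B.
Proof.
rewrite /frobnorm !pair_bigA /=.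
under eq_bigr do rewrite mxE.
exact: minkowski.
Qed.

Lemma frob_mul p q s (A : 'M[R]_(p, q)) (B : 'M[R]_(q, s)) :
  frobnorm (A *m B) <= frobnorm A * frobnorm B.
Proof.
rewrite /frobnorm -sqrtrM ?ss_ge0 //; apply: ler_wsqrtr.
rewrite [X in _ <= _ * X]exchange_big /= mulr_suml; apply: ler_sum => i _.
rewrite mulr_sumr; apply: ler_sum => j _.
rewrite mxE; exact: cs_sq.
Qed.

Lemma frob_scale p q a (B : 'M[R]_(p, q)) :
  frobnorm (a *: B) = `|a| * frobnorm B.
Proof.
rewrite /frobnorm -sqrtr_sqr -sqrtrM ?sqr_ge0 //; congr Num.sqrt.
rewrite mulr_sumr; apply: eq_bigr => i _; rewrite mulr_sumr; apply: eq_bigr => j _.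
by rewrite mxE exprMn.
Qed.

Lemma frob_tr p q (B : 'M[R]_(p, q)) : frobnorm B^T = frobnorm B.
Proof.
rewrite /frobnorm exchange_big /=; congr Num.sqrt.
by apply: eq_bigr => i _; apply: eq_bigr => j _; rewrite mxE.
Qed.

Definition sset p q (A : 'M[R]_(p, q)) :=
  [set frobnorm (A *m x) | x in [set x : 'cV[R]_q | frobnorm x <= 1]]%classic.

Lemma frob0 p q : frobnorm (0 : 'M[R]_(p, q)) = 0.
Proof.
rewrite /frobnorm big1 ?sqrtr0 // => i _; rewrite big1 // => j _; by rewrite mxE expr0n.
Qed.

Lemma sset_n0 p q (A : 'M[R]_(p, q)) : (sset A !=set0)%classic.
Proof. by exists (frobnorm (A *m (0 : 'cV[R]_q))); exists 0 => //=; rewrite frob0 ler01. Qed.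

Lemma sset_ub p q (A : 'M[R]_(p, q)) : ubound (sset A) (frobnorm A).
Proof.
move=> _ [x hx <-]; apply: (le_trans (frob_mul _ _)).
rewrite -[X in _ <= X]mulr1; apply: ler_wpM2l; first exact: frob_ge0.
exact: hx.
Qed.

Lemma sset_sup p q (A : 'M[R]_(p, q)) : has_sup (sset A).
Proof. by split; [exact: sset_n0 | exists (frobnorm A); exact: sset_ub]. Qed.

Lemma spec_ge0 p q (A : 'M[R]_(p, q)) : 0 <= specnorm A.
Proof.
apply: (le_trans (frob_ge0 (A *m (0 : 'cV[R]_q)))); apply: sup_upper_bound; first exact: sset_sup.
by exists 0 => //=; rewrite frob0 ler01.
Qed.

Lemma spec_ub p q (A : 'M[R]_(p, q)) C :
  (forall x : 'cV[R]_q, frobnorm x <= 1 -> frobnorm (A *m x) <= C) -> specnorm A <= C.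
Proof.
move=> H; apply: ge_sup; first exact: sset_n0.
by move=> _ [x hx <-]; apply: H.
Qed.

Lemma spec_vec p q (A : 'M[R]_(p, q)) (x : 'cV[R]_q) :
  frobnorm (A *m x) <= specnorm A * frobnorm x.
Proof.
have [h0|hp] := eqVneq (frobnorm x) 0.
  rewrite h0 mulr0; apply: (le_trans (frob_mul _ _)); by rewrite h0 mulr0.
have tp : 0 < frobnorm x by rewrite lt_def hp frob_ge0.
set t := frobnorm x.
have H : frobnorm (A *m (t^-1 *: x)) <= specnorm A.
  apply: sup_upper_bound; first exact: sset_sup.
  exists (t^-1 *: x) => //=.
  rewrite /= frob_scale -/t ger0_norm ?mulVf //; by rewrite invr_ge0 ltW.
move: H; rewrite -scalemxAr frob_scale ger0_norm; last by rewrite invr_ge0 ltW.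
move=> H; rewrite -ler_pdivrMr // mulrC; exact: H.
Qed.

Lemma N_ge0 s p q (A : 'M[R]_(p, q)) : 0 <= schatten s A.
Proof. by case: s; [exact: frob_ge0 | exact: spec_ge0]. Qed.

Lemma N_add s p q (A B : 'M[R]_(p, q)) :
  schatten s (A + B) <= schatten s A + schatten s B.
Proof.
case: s => /=; first exact: frob_add.
apply: spec_ub => x hx; rewrite mulmxDl.
apply: (le_trans (frob_add _ _)); apply: lerD.
  apply: (le_trans (spec_vec _ _)); rewrite -[X in _ <= X]mulr1.
  by apply: ler_wpM2l; [exact: spec_ge0 | exact: hx].
apply: (le_trans (spec_vec _ _)); rewrite -[X in _ <= X]mulr1.
by apply: ler_wpM2l; [exact: spec_ge0 | exact: hx].
Qed.

Lemma N_lmul s p q t (M : 'M[R]_(p, q)) (A : 'M[R]_(q, t)) c :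
  rdiag M c -> 0 <= c -> schatten s (M *m A) <= c * schatten s A.
Proof.
move=> hM c0; case: s => /=; first exact: rdiag_frob.
apply: spec_ub => x hx; rewrite -mulmxA.
apply: (le_trans (rdiag_frob _ hM c0)); apply: ler_wpM2l => //.
apply: (le_trans (spec_vec _ _)); rewrite -[X in _ <= X]mulr1.
by apply: ler_wpM2l; [exact: spec_ge0 | exact: hx].
Qed.

Lemma N_rmul s p q t (A : 'M[R]_(p, q)) (M : 'M[R]_(q, t)) c :
  rdiag M c -> 0 <= c -> schatten s (A *m M) <= c * schatten s A.
Proof.
move=> hM c0; case: s => /=.
  rewrite -frob_tr trmx_mul -(frob_tr A); apply: rdiag_frob => //; exact: rdiag_tr.
apply: spec_ub => x hx; rewrite -mulmxA.
apply: (le_trans (spec_vec _ _)); rewrite mulrC; apply: ler_wpM2r; first exact: spec_ge0.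
apply: (le_trans (rdiag_frob _ hM c0)); rewrite -[X in _ <= X]mulr1.
by apply: ler_wpM2l.
Qed.

Lemma rdiag_diag n (d : 'I_n -> R) c : 0 <= c -> (forall j, `|d j| <= c) ->
  rdiag (diag_mx (\row_j d j)) c.
Proof.
move=> c0 hd; split => i k; rewrite !mxE.
  by move=> h; have -> : (i == k) = false by apply/negbTE; apply: contra h => /eqP ->.
by case: (i == k) => /=; rewrite ?mulr1n ?mulr0n ?normr0.
Qed.

Lemma inv_le (u v : R) : 0 < v -> v <= u -> u^-1 <= v^-1.
Proof. move=> v0 vu; rewrite lef_pV2 ?posrE //; exact: (lt_le_trans v0 vu). Qed.

Lemma arith1 (u w h a b : R) : 0 <= a -> a < b -> 0 <= h ->
  w <= h + a ^+ 2 * b^-2 * w -> u <= b^-1 * w -> u <= b / (b ^+ 2 - a ^+ 2) * h.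
Proof.
move=> a0 ab h0 hw hu.
have b0 : 0 < b := le_lt_trans a0 ab.
have D0 : 0 < b ^+ 2 - a ^+ 2 by nra.
have hw' : w * (b ^+ 2 - a ^+ 2) <= h * b ^+ 2.
  have := ler_wpM2r (ltW (exprn_gt0 2 b0)) hw.
  have -> : (h + a ^+ 2 * b^-2 * w) * b ^+ 2 = h * b ^+ 2 + a ^+ 2 * w.
    by field; rewrite gt_eqF.
  move=> H; lra.
apply: (le_trans hu).
have -> : b / (b ^+ 2 - a ^+ 2) * h = b^-1 * (h * b ^+ 2 / (b ^+ 2 - a ^+ 2)).
  by field; rewrite !gt_eqF.
apply: ler_wpM2l; first by rewrite invr_ge0 ltW.
by rewrite ler_pdivlMr.
Qed.

Lemma arith2 (w k h a b : R) : 0 <= a -> a < b -> 0 <= h ->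
  w <= b^-2 * k + a ^+ 2 * b^-2 * w -> k <= a * h -> w <= a / (b ^+ 2 - a ^+ 2) * h.
Proof.
move=> a0 ab h0 hw hk.
have b0 : 0 < b := le_lt_trans a0 ab.
have D0 : 0 < b ^+ 2 - a ^+ 2 by nra.
have hw' : w * (b ^+ 2 - a ^+ 2) <= a * h.
  have := ler_wpM2r (ltW (exprn_gt0 2 b0)) hw.
  have -> : (b^-2 * k + a ^+ 2 * b^-2 * w) * b ^+ 2 = k + a ^+ 2 * w.
    by field; rewrite gt_eqF.
  move=> H; lra.
rewrite mulrAC ler_pdivlMr //.
Qed.

Section Bounds.
Variable s : schatten_index.
Local Notation N := (schatten s).

Lemma boundA p q (H : 'M[R]_(p, q)) (x : 'I_p -> R) (y : 'I_q -> R) a b :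
  0 <= a -> a < b -> (forall i, 0 <= x i <= a) -> (forall j, b <= y j) ->
  N (\matrix_(i, j) (H i j * y j / (y j ^+ 2 - x i ^+ 2))) <=
  b / (b ^+ 2 - a ^+ 2) * N H.
Proof.
move=> a0 ab hx hy.
have b0 : 0 < b := le_lt_trans a0 ab.
have y0 : forall j, 0 < y j by move=> j; exact: (lt_le_trans b0 (hy j)).
have yx : forall i j, y j ^+ 2 - x i ^+ 2 != 0.
  move=> i j; apply: lt0r_neq0; have := hy j; have := hx i; case/andP => h1 h2 h3; nra.
set B := \matrix_(i, j) _.
set Z := B *m diag_mx (\row_j y j).
have EZ : Z = H + diag_mx (\row_i x i ^+ 2) *m Z *m diag_mx (\row_j (y j ^+ 2)^-1).
  apply/matrixP => i j; rewrite /Z !mul_mx_diag mul_diag_mx !mxE.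
  by field; rewrite yx gt_eqF.
have EB : B = Z *m diag_mx (\row_j (y j)^-1).
  apply/matrixP => i j; rewrite /Z !mul_mx_diag !mxE.
  by field; rewrite yx gt_eqF.
have b20 : 0 <= b^-2 by rewrite invr_ge0 exprn_ge0 // ltW.
have NZ : N Z <= N H + a ^+ 2 * b^-2 * N Z.
  rewrite {1}EZ; apply: (le_trans (N_add _ _ _)); apply: lerD => //.
  apply: (le_trans (N_rmul _ _ (c := b^-2) _ _)) => //.
    apply: rdiag_diag => // j; rewrite ger0_norm; last by rewrite invr_ge0 exprn_ge0 // ltW.
    apply: inv_le; first exact: exprn_gt0.
    have := hy j; nra.
  rewrite mulrAC [X in _ <= X]mulrC; apply: ler_wpM2l => //.
  apply: N_lmul; last exact: exprn_ge0.
  apply: rdiag_diag; first exact: exprn_ge0.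
  move=> i; rewrite ger0_norm ?exprn_ge0 //; last by case/andP: (hx i).
  have := hx i; case/andP => h1 h2; nra.
apply: (arith1 a0 ab (N_ge0 _ _) NZ).
rewrite EB; apply: N_rmul; last by rewrite invr_ge0 ltW.
apply: rdiag_diag; first by rewrite invr_ge0 ltW.
move=> j; rewrite ger0_norm; last by rewrite invr_ge0 ltW.
exact: inv_le.
Qed.

Lemma boundB p q (H : 'M[R]_(p, q)) (x : 'I_p -> R) (y : 'I_q -> R) a b :
  0 <= a -> a < b -> (forall i, b <= x i) -> (forall j, 0 <= y j <= a) ->
  N (\matrix_(i, j) (H i j * x i / (y j ^+ 2 - x i ^+ 2))) <=
  b / (b ^+ 2 - a ^+ 2) * N H.
Proof.
move=> a0 ab hx hy.
have b0 : 0 < b := le_lt_trans a0 ab.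
have x0 : forall i, 0 < x i by move=> i; exact: (lt_le_trans b0 (hx i)).
have yx : forall i j, y j ^+ 2 - x i ^+ 2 != 0.
  move=> i j; apply: ltr0_neq0; have := hx i; have := hy j; case/andP => h1 h2 h3; nra.
set B := \matrix_(i, j) _.
set W := diag_mx (\row_i - x i) *m B.
have EW : W = H + diag_mx (\row_i (x i ^+ 2)^-1) *m W *m diag_mx (\row_j y j ^+ 2).
  apply/matrixP => i j; rewrite /W !mul_mx_diag !mul_diag_mx !mxE.
  by field; rewrite yx gt_eqF.
have EB : B = diag_mx (\row_i - (x i)^-1) *m W.
  apply/matrixP => i j; rewrite /W !mul_diag_mx !mxE.
  by field; rewrite yx gt_eqF.
have b20 : 0 <= b^-2 by rewrite invr_ge0 exprn_ge0 // ltW.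
have NW : N W <= N H + a ^+ 2 * b^-2 * N W.
  rewrite {1}EW; apply: (le_trans (N_add _ _ _)); apply: lerD => //.
  apply: (le_trans (N_rmul _ _ (c := a ^+ 2) _ _)); last 1 first.
  - rewrite -mulrA; apply: ler_wpM2l; first exact: exprn_ge0.
    apply: N_lmul => //; apply: rdiag_diag => // i.
    rewrite ger0_norm; last by rewrite invr_ge0 exprn_ge0 // ltW.
    apply: inv_le; first exact: exprn_gt0.
    have := hx i; nra.
  - apply: rdiag_diag; first exact: exprn_ge0.
    move=> j; rewrite ger0_norm ?exprn_ge0 //; last by case/andP: (hy j).
    have := hy j; case/andP => h1 h2; nra.
  - exact: exprn_ge0.
apply: (arith1 a0 ab (N_ge0 _ _) NW).
rewrite EB; apply: N_lmul; last by rewrite invr_ge0 ltW.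
apply: rdiag_diag; first by rewrite invr_ge0 ltW.
move=> i; rewrite normrN ger0_norm; last by rewrite invr_ge0 ltW.
exact: inv_le.
Qed.

Lemma boundC p q (K : 'M[R]_(p, q)) (x : 'I_p -> R) (y : 'I_q -> R) a b h :
  0 <= a -> a < b -> 0 <= h -> (forall i, 0 <= x i <= a) -> (forall j, b <= y j) ->
  N K <= a * h ->
  N (\matrix_(i, j) (K i j / (y j ^+ 2 - x i ^+ 2))) <=
  a / (b ^+ 2 - a ^+ 2) * h.
Proof.
move=> a0 ab h0 hx hy hK.
have b0 : 0 < b := le_lt_trans a0 ab.
have y0 : forall j, 0 < y j by move=> j; exact: (lt_le_trans b0 (hy j)).
have yx : forall i j, y j ^+ 2 - x i ^+ 2 != 0.
  move=> i j; apply: lt0r_neq0; have := hy j; have := hx i; case/andP => h1 h2 h3; nra.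
set B := \matrix_(i, j) _.
have EB : B = K *m diag_mx (\row_j (y j ^+ 2)^-1) +
   diag_mx (\row_i x i ^+ 2) *m B *m diag_mx (\row_j (y j ^+ 2)^-1).
  apply/matrixP => i j; rewrite !mul_mx_diag mul_diag_mx !mxE.
  by field; rewrite yx gt_eqF.
have b20 : 0 <= b^-2 by rewrite invr_ge0 exprn_ge0 // ltW.
have hD : rdiag (diag_mx (\row_j (y j ^+ 2)^-1)) (b^-2).
  apply: rdiag_diag => // j; rewrite ger0_norm; last by rewrite invr_ge0 exprn_ge0 // ltW.
  apply: inv_le; first exact: exprn_gt0.
  have := hy j; nra.
have NB : N B <= b^-2 * N K + a ^+ 2 * b^-2 * N B.
  rewrite {1}EB; apply: (le_trans (N_add _ _ _)); apply: lerD.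
    exact: N_rmul.
  apply: (le_trans (N_rmul _ _ hD b20)).
  rewrite mulrAC [X in _ <= X]mulrC; apply: ler_wpM2l => //.
  apply: N_lmul; last exact: exprn_ge0.
  apply: rdiag_diag; first exact: exprn_ge0.
  move=> i; rewrite ger0_norm ?exprn_ge0 //; last by case/andP: (hx i).
  have := hx i; case/andP => h1 h2; nra.
exact: (arith2 a0 ab h0 NB hK).
Qed.

Lemma boundD p q (K : 'M[R]_(p, q)) (x : 'I_p -> R) (y : 'I_q -> R) a b h :
  0 <= a -> a < b -> 0 <= h -> (forall i, b <= x i) -> (forall j, 0 <= y j <= a) ->
  N K <= a * h ->
  N (\matrix_(i, j) (K i j / (y j ^+ 2 - x i ^+ 2))) <=
  a / (b ^+ 2 - a ^+ 2) * h.
Proof.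
move=> a0 ab h0 hx hy hK.
have b0 : 0 < b := le_lt_trans a0 ab.
have x0 : forall i, 0 < x i by move=> i; exact: (lt_le_trans b0 (hx i)).
have yx : forall i j, y j ^+ 2 - x i ^+ 2 != 0.
  move=> i j; apply: ltr0_neq0; have := hx i; have := hy j; case/andP => h1 h2 h3; nra.
set B := \matrix_(i, j) _.
have EB : B = diag_mx (\row_i - (x i ^+ 2)^-1) *m K +
   diag_mx (\row_i (x i ^+ 2)^-1) *m B *m diag_mx (\row_j y j ^+ 2).
  apply/matrixP => i j; rewrite !mul_mx_diag !mul_diag_mx !mxE.
  by field; rewrite yx gt_eqF.
have b20 : 0 <= b^-2 by rewrite invr_ge0 exprn_ge0 // ltW.
have hxb : forall i, `|(x i ^+ 2)^-1| <= b^-2.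
  move=> i; rewrite ger0_norm; last by rewrite invr_ge0 exprn_ge0 // ltW.
  apply: inv_le; first exact: exprn_gt0.
  have := hx i; nra.
have NB : N B <= b^-2 * N K + a ^+ 2 * b^-2 * N B.
  rewrite {1}EB; apply: (le_trans (N_add _ _ _)); apply: lerD.
    apply: N_lmul => //; apply: rdiag_diag => // i; rewrite normrN; exact: hxb.
  apply: (le_trans (N_rmul _ _ (c := a ^+ 2) _ _)); last 1 first.
  - rewrite -mulrA; apply: ler_wpM2l; first exact: exprn_ge0.
    by apply: N_lmul => //; apply: rdiag_diag.
  - apply: rdiag_diag; first exact: exprn_ge0.
    move=> j; rewrite ger0_norm ?exprn_ge0 //; last by case/andP: (hy j).
    have := hy j; case/andP => h1 h2; nra.
  - exact: exprn_ge0.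
exact: (arith2 a0 ab h0 NB hK).
Qed.

End Bounds.
Lemma mono_nat (f : nat -> R) : (forall k, f k.+1 <= f k) ->
  forall i j, (i <= j)%N -> f j <= f i.
Proof.
move=> hf i; elim => [|j IH]; first by rewrite leqn0 => /eqP ->.
rewrite leq_eqVlt => /orP [/eqP -> //|]; rewrite ltnS => hij.
exact: (le_trans (hf j) (IH hij)).
Qed.

Lemma Sig1_diag r (f : nat -> R) : Sig1 r f = diag_mx (\row_(j < r) f j).
Proof.
apply/matrixP => i j; rewrite !mxE.
have -> : ((i : nat) == j) = (i == j) by [].
by case: eqP => [->|_]; rewrite ?mulr1n ?mulr0n.
Qed.

Lemma Sig2_rdiag n m r (f : nat -> R) c : 0 <= c ->
  (forall i, (r <= i)%N -> `|f i| <= c) -> rdiag (Sig2 n m r f) c.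
Proof.
move=> c0 hf; split => i k; rewrite !mxE.
  by move=> /negbTE ->.
case: ifP => _; last by rewrite normr0.
by apply: hf; rewrite leq_addr.
Qed.

End Aux.

Theorem lemma2p5 (R : realType) (n m r : nat) (A dA : 'M[R]_(n, m))
  (U : 'M[R]_n) (S : 'M[R]_(n, m)) (V : 'M[R]_m)
  (Ut : 'M[R]_n) (St : 'M[R]_(n, m)) (Vt : 'M[R]_m) :
  is_svd A U S V -> is_svd (A + dA) Ut St Vt ->
  (1 <= r)%N -> (r < minn n m)%N ->
  0 < sv S r.-1 - sv St r -> 0 < sv St r.-1 - sv S r ->
  forall (H1 : 'M[R]_(n - r, r)) (H2 : 'M[R]_(m - r, r))
         (H3 : 'M[R]_(r, m - r)) (H4 : 'M[R]_(r, n - r)),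
  let sig := sv S in let sigt := sv St in
  let B1 := hadamard (FU21 n r sig sigt) (H1 *m Sig1 r sigt) in
  let B2 := hadamard (FU21 n r sig sigt) (Sig2 n m r sig *m H2) in
  let B3 := hadamard (FU12 n r sig sigt) (H3 *m (Sig2 n m r sigt)^T) in
  let B4 := hadamard (FU12 n r sig sigt) (Sig1 r sig *m H4) in
  forall p : schatten_index,
  [/\ schatten p B1 <= sigt r.-1 / (sigt r.-1 ^+ 2 - sig r ^+ 2) * schatten p H1,
      schatten p B2 <= sig r / (sigt r.-1 ^+ 2 - sig r ^+ 2) * schatten p H2,
      schatten p B3 <= sigt r / (sig r.-1 ^+ 2 - sigt r ^+ 2) * schatten p H3
    & schatten p B4 <= sig r.-1 / (sig r.-1 ^+ 2 - sigt r ^+ 2) * schatten p H4].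
Proof.
move=> hS hSt r1 rmn h1 h2 H1 H2 H3 H4 sig sigt B1 B2 B3 B4 p.
have hs : forall k, 0 <= sig k /\ sig k.+1 <= sig k by case: hS.
have hst : forall k, 0 <= sigt k /\ sigt k.+1 <= sigt k by case: hSt.
have ms : forall i j, (i <= j)%N -> sig j <= sig i.
  by apply: mono_nat => k; case: (hs k).
have mst : forall i j, (i <= j)%N -> sigt j <= sigt i.
  by apply: mono_nat => k; case: (hst k).
have s0 : forall k, 0 <= sig k by move=> k; case: (hs k).
have st0 : forall k, 0 <= sigt k by move=> k; case: (hst k).
have ab1 : sig r < sigt r.-1 by rewrite -subr_gt0.
have ab2 : sigt r < sig r.-1 by rewrite -subr_gt0.
have ltr1 : forall j : 'I_r, (j <= r.-1)%N.
  by move=> j; rewrite -ltnS prednK // ltn_ord.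
split.
- have -> : B1 = \matrix_(i, j) (H1 i j * sigt j / (sigt j ^+ 2 - sig (r + i)%N ^+ 2)).
    apply/matrixP => i j; rewrite /B1 /hadamard /FU21 Sig1_diag mul_mx_diag !mxE.
    by rewrite mul1r mulrC.
  apply: (@boundA _ p _ _ H1 (fun i : 'I_(n - r) => sig (r + i)%N) (fun j : 'I_r => sigt j)).
  + exact: s0.
  + exact: ab1.
  + by move=> i; rewrite s0 /=; apply: ms; rewrite leq_addr.
  + by move=> j; apply: mst.
- have -> : B2 = \matrix_(i, j) ((Sig2 n m r sig *m H2) i j /
      (sigt j ^+ 2 - sig (r + i)%N ^+ 2)).
    apply/matrixP => i j; rewrite /B2 /hadamard /FU21 !mxE.
    by rewrite mul1r mulrC.
  apply: (@boundC _ p _ _ _ (fun i : 'I_(n - r) => sig (r + i)%N) (fun j : 'I_r => sigt j)).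
  + exact: s0.
  + exact: ab1.
  + exact: N_ge0.
  + by move=> i; rewrite s0 /=; apply: ms; rewrite leq_addr.
  + by move=> j; apply: mst.
  + apply: N_lmul; last exact: s0.
    apply: Sig2_rdiag; first exact: s0.
    by move=> i hi; rewrite ger0_norm //; apply: ms.
- have -> : B3 = \matrix_(i, j) ((H3 *m (Sig2 n m r sigt)^T) i j /
      (sigt (r + j)%N ^+ 2 - sig i ^+ 2)).
    apply/matrixP => i j; rewrite /B3 /hadamard /FU12 !mxE.
    by rewrite mul1r mulrC.
  apply: (@boundD _ p _ _ _ (fun i : 'I_r => sig i) (fun j : 'I_(n - r) => sigt (r + j)%N)).
  + exact: st0.
  + exact: ab2.
  + exact: N_ge0.
  + by move=> i; apply: ms.
  + by move=> j; rewrite st0 /=; apply: mst; rewrite leq_addr.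
  + apply: N_rmul; last exact: st0.
    apply: rdiag_tr; apply: Sig2_rdiag; first exact: st0.
    by move=> i hi; rewrite ger0_norm //; apply: mst.
- have -> : B4 = \matrix_(i, j) (H4 i j * sig i / (sigt (r + j)%N ^+ 2 - sig i ^+ 2)).
    apply/matrixP => i j; rewrite /B4 /hadamard /FU12 Sig1_diag mul_diag_mx !mxE.
    by rewrite mul1r mulrC (mulrC (sig i)).
  apply: (@boundB _ p _ _ H4 (fun i : 'I_r => sig i) (fun j : 'I_(n - r) => sigt (r + j)%N)).
  + exact: st0.
  + exact: ab2.
  + by move=> i; apply: ms.
  + by move=> j; rewrite st0 /=; apply: mst; rewrite leq_addr.
Qed.
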